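(* Let $Q$ be an automorphic loop of nilpotency class $2$. Then $(ab,c,d)=(a,c,d)(b,c,d)$, $(a,bc,d)=(a,b,d)(a,c,d)$, and $(a,b,cd)=(a,b,c)(a,b,d)$ for every $a,b,c,d\in Q$.
   Context: A loop is a set with a binary operation such that all left and right translations $L_a:b\mapsto ab$, $R_a:b\mapsto ba$ are bijections and there is a two-sided identity $1$. The inner mapping group is the stabilizer of $1$ in the group generated by all translations; $Q$ is automorphic if all inner mappings are automorphisms. The associator $(a,b,c)$ is defined by $(ab)c=(a(bc))(a,b,c)$. The center $Z(Q)$ is the set of elements fixed by all inner mappings; $Z_0=1$, $Z_{i+1}(Q)$ is the preimage of $Z(Q/Z_i(Q))$, and $Q$ has nilpotency class $n$ if $Z_{n-1}(Q)\neq Q=Z_n(Q)$. *)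

(* Defs.v *)
From Stdlib Require Import ClassicalEpsilon.

Set Implicit Arguments.

Record lops := LOps {
  lcar :> Type;
  lmul : lcar -> lcar -> lcar;
  lldiv : lcar -> lcar -> lcar;   (* a \ b : the unique x with a x = b *)
  lrdiv : lcar -> lcar -> lcar;   (* b / a : the unique x with x a = b *)
  lone : lcar
}.

Arguments lmul {l} _ _.
Arguments lldiv {l} _ _.
Arguments lrdiv {l} _ _.
Arguments lone {l}.

Definition is_loop (Q : lops) : Prop :=
  (forall a b : Q, lmul a (lldiv a b) = b) /\
  (forall a b : Q, lldiv a (lmul a b) = b) /\
  (forall a b : Q, lmul (lrdiv b a) a = b) /\
  (forall a b : Q, lrdiv (lmul b a) a = b) /\
  (forall a : Q, lmul lone a = a) /\
  (forall a : Q, lmul a lone = a).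

(* The multiplication group: the group of permutations generated by all
   left and right translations (generated as a monoid by the translations
   and their inverses). *)
Inductive mlt (Q : lops) : (Q -> Q) -> Prop :=
  | mlt_id : mlt Q (fun x => x)
  | mlt_L a f : mlt Q f -> mlt Q (fun x => lmul a (f x))
  | mlt_R a f : mlt Q f -> mlt Q (fun x => lmul (f x) a)
  | mlt_Linv a f : mlt Q f -> mlt Q (fun x => lldiv a (f x))
  | mlt_Rinv a f : mlt Q f -> mlt Q (fun x => lrdiv (f x) a).
Arguments mlt {Q} _.

Definition inner {Q : lops} (f : Q -> Q) : Prop := mlt f /\ f lone = lone.

(* Automorphic loop: every inner mapping is an automorphism
   (inner mappings are bijections, being in the multiplication group). *)
Definition automorphic (Q : lops) : Prop :=
  forall f : Q -> Q, inner f -> forall x y : Q, f (lmul x y) = lmul (f x) (f y).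

Definition center {Q : lops} (x : Q) : Prop := forall f : Q -> Q, inner f -> f x = x.

(* Quotient Q/N: carrier = left cosets xN, operations via representatives. *)
Section Quotient.
Variables (Q : lops) (N : Q -> Prop).

Definition coset (x : Q) : Q -> Prop := fun z => exists n, N n /\ z = lmul x n.

Definition qcar : Type := {C : Q -> Prop | exists x, C = coset x}.

Definition qclass (x : Q) : qcar := exist _ (coset x) (ex_intro _ x eq_refl).

Definition qrep (C : qcar) : Q :=
  proj1_sig (constructive_indefinite_description _ (proj2_sig C)).

Definition quot : lops :=
  @LOps qcar
    (fun C D => qclass (lmul (qrep C) (qrep D)))
    (fun C D => qclass (lldiv (qrep C) (qrep D)))
    (fun C D => qclass (lrdiv (qrep C) (qrep D)))
    (qclass lone).
End Quotient.

Fixpoint zcent (Q : lops) (i : nat) : Q -> Prop :=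
  match i with
  | 0 => fun x => x = lone
  | S i => fun x => @center (@quot Q (zcent Q i)) (@qclass Q (zcent Q i) x)
  end.

Definition nilpotency_class (Q : lops) (n : nat) : Prop :=
  (exists x : Q, ~ zcent Q (Nat.pred n) x) /\ (forall x : Q, zcent Q n x).

(* Associator: (ab)c = (a(bc)) (a,b,c). *)
Definition associator {Q : lops} (a b c : Q) : Q :=
  lldiv (lmul a (lmul b c)) (lmul (lmul a b) c).

(* Main.v *)
Require Import Defs.
From Stdlib Require Import FunctionalExtensionality PropExtensionality ProofIrrelevance ClassicalEpsilon.


Lemma l1 {Q : lops} : is_loop Q -> forall a b : Q, lmul a (lldiv a b) = b.
Proof. intros H; apply H. Qed.
Lemma l2 {Q : lops} : is_loop Q -> forall a b : Q, lldiv a (lmul a b) = b.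
Proof. intros H; apply H. Qed.
Lemma l3 {Q : lops} : is_loop Q -> forall a b : Q, lmul (lrdiv b a) a = b.
Proof. intros H; apply H. Qed.
Lemma l4 {Q : lops} : is_loop Q -> forall a b : Q, lrdiv (lmul b a) a = b.
Proof. intros H; apply H. Qed.
Lemma l5 {Q : lops} : is_loop Q -> forall a : Q, lmul lone a = a.
Proof. intros H; apply H. Qed.
Lemma l6 {Q : lops} : is_loop Q -> forall a : Q, lmul a lone = a.
Proof. intros H; apply H. Qed.

Lemma lcancel {Q : lops} : is_loop Q -> forall a b c : Q, lmul a b = lmul a c -> b = c.
Proof. intros H a b c E. rewrite <- (l2 H a b), E. apply (l2 H). Qed.
Lemma rcancel {Q : lops} : is_loop Q -> forall a b c : Q, lmul b a = lmul c a -> b = c.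
Proof. intros H a b c E. rewrite <- (l4 H a b), E. apply (l4 H). Qed.

Lemma c_comm {Q : lops} (H : is_loop Q) {z : Q} : center z -> forall a, lmul z a = lmul a z.
Proof.
  intros C a.
  assert (E : (fun x => lldiv a (lmul x a)) z = z).
  { apply (C (fun x => lldiv a (lmul x a))). split.
    - apply (@mlt_Linv _ a (fun x => lmul x a)). apply (@mlt_R _ a (fun x => x)). constructor.
    - cbv beta. rewrite (l5 H). transitivity (lldiv a (lmul a lone)); [rewrite (l6 H); reflexivity | apply (l2 H)]. }
  cbv beta in E. rewrite <- E at 2. rewrite (l1 H). reflexivity.
Qed.

Lemma c_as1 {Q : lops} (H : is_loop Q) {z : Q} : center z -> forall a b, lmul (lmul z a) b = lmul z (lmul a b).
Proof.
  intros C a b.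
  assert (E : (fun x => lrdiv (lmul (lmul x a) b) (lmul a b)) z = z).
  { apply (C (fun x => lrdiv (lmul (lmul x a) b) (lmul a b))). split.
    - apply (@mlt_Rinv _ (lmul a b) (fun x => lmul (lmul x a) b)).
      apply (@mlt_R _ b (fun x => lmul x a)). apply (@mlt_R _ a (fun x => x)). constructor.
    - cbv beta. rewrite (l5 H). transitivity (lrdiv (lmul lone (lmul a b)) (lmul a b)); [rewrite (l5 H); reflexivity | apply (l4 H)]. }
  cbv beta in E. rewrite <- E at 2. rewrite (l3 H). reflexivity.
Qed.

Lemma c_as2 {Q : lops} (H : is_loop Q) {z : Q} : center z -> forall a b, lmul (lmul a z) b = lmul a (lmul z b).
Proof.
  intros C a b.
  assert (E : (fun x => lrdiv (lldiv a (lmul (lmul a x) b)) b) z = z).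
  { apply (C (fun x => lrdiv (lldiv a (lmul (lmul a x) b)) b)). split.
    - apply (@mlt_Rinv _ b (fun x => lldiv a (lmul (lmul a x) b))).
      apply (@mlt_Linv _ a (fun x => lmul (lmul a x) b)).
      apply (@mlt_R _ b (fun x => lmul a x)). apply (@mlt_L _ a (fun x => x)). constructor.
    - cbv beta. rewrite (l6 H), (l2 H). transitivity (lrdiv (lmul lone b) b); [rewrite (l5 H); reflexivity | apply (l4 H)]. }
  cbv beta in E. rewrite <- E at 2. rewrite (l3 H), (l1 H). reflexivity.
Qed.

Lemma c_as3 {Q : lops} (H : is_loop Q) {z : Q} : center z -> forall a b, lmul (lmul a b) z = lmul a (lmul b z).
Proof.
  intros C a b.
  assert (E : (fun x => lldiv (lmul a b) (lmul a (lmul b x))) z = z).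
  { apply (C (fun x => lldiv (lmul a b) (lmul a (lmul b x)))). split.
    - apply (@mlt_Linv _ (lmul a b) (fun x => lmul a (lmul b x))).
      apply (@mlt_L _ a (fun x => lmul b x)). apply (@mlt_L _ b (fun x => x)). constructor.
    - cbv beta. rewrite (l6 H). transitivity (lldiv (lmul a b) (lmul (lmul a b) lone)); [rewrite (l6 H); reflexivity | apply (l2 H)]. }
  cbv beta in E. rewrite <- E at 1. rewrite (l1 H). reflexivity.
Qed.

Lemma c_one {Q : lops} : @center Q lone.
Proof. intros f [_ E]; exact E. Qed.

Lemma c_mul {Q : lops} (H : is_loop Q) (HA : automorphic Q) {n m : Q} :
  center n -> center m -> center (lmul n m).
Proof. intros Cn Cm f If. rewrite (HA f If), (Cn f If), (Cm f If). reflexivity. Qed.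

Lemma c_ldiv {Q : lops} (H : is_loop Q) (HA : automorphic Q) {n m : Q} :
  center n -> center m -> center (lldiv n m).
Proof.
  intros Cn Cm f If. apply (lcancel H n).
  rewrite (l1 H). rewrite <- (Cn f If) at 1. rewrite <- (HA f If), (l1 H). apply Cm; exact If.
Qed.

Lemma swap4 {Q : lops} (H : is_loop Q) (HA : automorphic Q) (x y n m : Q) : center n -> center m ->
  lmul (lmul x n) (lmul y m) = lmul (lmul x y) (lmul n m).
Proof.
  intros Cn Cm.
  rewrite (c_as2 H Cn). rewrite <- (c_as1 H Cn). rewrite (c_comm H Cn y).
  rewrite (c_as2 H Cn). rewrite (c_as3 H (c_mul H HA Cn Cm)). reflexivity.
Qed.

Definition NP {Q : lops} (N : Q -> Prop) : Prop :=
  (forall n, N n -> center n) /\ N lone /\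
  (forall n m, N n -> N m -> N (lmul n m)) /\ (forall n m, N n -> N m -> N (lldiv n m)).

Lemma sig_ext {Q : lops} (N : Q -> Prop) (C D : qcar Q N) : proj1_sig C = proj1_sig D -> C = D.
Proof.
  destruct C as [c p], D as [d q]; simpl; intros E; subst d. f_equal. apply proof_irrelevance.
Qed.

Lemma coset_mul {Q : lops} (H : is_loop Q) (N : Q -> Prop) (HN : NP N) (x n : Q) :
  N n -> coset Q N (lmul x n) = coset Q N x.
Proof.
  destruct HN as [NC [N1 [NM ND]]]. intros Nn.
  apply functional_extensionality; intro z. apply propositional_extensionality.
  unfold coset; split.
  - intros [m [Nm ->]]. exists (lmul n m). split; [apply NM; auto|].
    apply (c_as2 H (NC _ Nn)).
  - intros [m [Nm ->]]. exists (lldiv n m). split; [apply ND; auto|].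
    rewrite (c_as2 H (NC _ Nn)), (l1 H). reflexivity.
Qed.

Lemma in_coset {Q : lops} (H : is_loop Q) (N : Q -> Prop) (HN : NP N) (x : Q) : coset Q N x x.
Proof. exists lone. split; [apply HN|]. rewrite (l6 H). reflexivity. Qed.

Lemma qrep_spec {Q : lops} (H : is_loop Q) (N : Q -> Prop) (HN : NP N) (x : Q) :
  exists n, N n /\ qrep (qclass Q N x) = lmul x n.
Proof.
  unfold qrep. destruct (constructive_indefinite_description _ _) as [r Hr]. simpl in *.
  assert (Hc := in_coset H N HN r). rewrite <- Hr in Hc. exact Hc.
Qed.

Lemma qclass_inj {Q : lops} (H : is_loop Q) (N : Q -> Prop) (HN : NP N) (x y : Q) :
  qclass Q N x = qclass Q N y -> exists n, N n /\ y = lmul x n.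
Proof.
  intros E. apply (f_equal (@proj1_sig _ _)) in E. simpl in E.
  assert (Hc := in_coset H N HN y). rewrite <- E in Hc. exact Hc.
Qed.

Lemma qclass_rep {Q : lops} {N : Q -> Prop} (C : qcar Q N) : C = qclass Q N (qrep C).
Proof.
  apply sig_ext. unfold qrep. destruct (constructive_indefinite_description _ _) as [r Hr].
  simpl. exact Hr.
Qed.

Lemma qmul_cl {Q : lops} (H : is_loop Q) (HA : automorphic Q) (N : Q -> Prop) (HN : NP N) (x y : Q) :
  @lmul (quot Q N) (qclass Q N x) (qclass Q N y) = qclass Q N (lmul x y).
Proof.
  simpl. destruct (qrep_spec H N HN x) as [n [Nn ->]].
  destruct (qrep_spec H N HN y) as [m [Nm ->]].
  destruct HN as [NC [N1 [NM ND]]] eqn:HN'.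
  rewrite (swap4 H HA x y n m (NC _ Nn) (NC _ Nm)).
  apply sig_ext; simpl. apply (coset_mul H N HN). auto.
Qed.

Lemma qldiv_cl {Q : lops} (H : is_loop Q) (HA : automorphic Q) (N : Q -> Prop) (HN : NP N) (x y : Q) :
  @lldiv (quot Q N) (qclass Q N x) (qclass Q N y) = qclass Q N (lldiv x y).
Proof.
  simpl. destruct (qrep_spec H N HN x) as [n [Nn ->]].
  destruct (qrep_spec H N HN y) as [m [Nm ->]].
  destruct HN as [NC [N1 [NM ND]]] eqn:HN'.
  assert (E : lldiv (lmul x n) (lmul y m) = lmul (lldiv x y) (lldiv n m)).
  { apply (lcancel H (lmul x n)). rewrite (l1 H).
    rewrite (swap4 H HA x (lldiv x y) n (lldiv n m) (NC _ Nn) (NC _ (ND _ _ Nn Nm))).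
    rewrite !(l1 H). reflexivity. }
  rewrite E. apply sig_ext; simpl. apply (coset_mul H N HN). auto.
Qed.

Lemma qrdiv_cl {Q : lops} (H : is_loop Q) (HA : automorphic Q) (N : Q -> Prop) (HN : NP N) (x y : Q) :
  @lrdiv (quot Q N) (qclass Q N y) (qclass Q N x) = qclass Q N (lrdiv y x).
Proof.
  simpl. destruct (qrep_spec H N HN x) as [n [Nn ->]].
  destruct (qrep_spec H N HN y) as [m [Nm ->]].
  destruct HN as [NC [N1 [NM ND]]] eqn:HN'.
  assert (E : lrdiv (lmul y m) (lmul x n) = lmul (lrdiv y x) (lldiv n m)).
  { apply (rcancel H (lmul x n)). rewrite (l3 H).
    rewrite (swap4 H HA (lrdiv y x) x (lldiv n m) n (NC _ (ND _ _ Nn Nm)) (NC _ Nn)).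
    rewrite (l3 H). rewrite <- (c_comm H (NC _ Nn)), (l1 H). reflexivity. }
  rewrite E. apply sig_ext; simpl. apply (coset_mul H N HN). auto.
Qed.

Lemma mlt_to_q {Q : lops} (H : is_loop Q) (HA : automorphic Q) (N : Q -> Prop) (HN : NP N) (g : Q -> Q) :
  mlt g -> exists f : quot Q N -> quot Q N, mlt f /\ forall y, f (qclass Q N y) = qclass Q N (g y).
Proof.
  induction 1 as [|a g _ [f [Mf Ef]]|a g _ [f [Mf Ef]]|a g _ [f [Mf Ef]]|a g _ [f [Mf Ef]]].
  - exists (fun x => x). split; [constructor|reflexivity].
  - exists (fun C => @lmul (quot Q N) (qclass Q N a) (f C)). split; [constructor; auto|].
    intros y. rewrite Ef. apply (qmul_cl H HA N HN).
  - exists (fun C => @lmul (quot Q N) (f C) (qclass Q N a)). split; [constructor; auto|].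
    intros y. rewrite Ef. apply (qmul_cl H HA N HN).
  - exists (fun C => @lldiv (quot Q N) (qclass Q N a) (f C)). split; [constructor; auto|].
    intros y. rewrite Ef. apply (qldiv_cl H HA N HN).
  - exists (fun C => @lrdiv (quot Q N) (f C) (qclass Q N a)). split; [constructor; auto|].
    intros y. rewrite Ef. apply (qrdiv_cl H HA N HN).
Qed.

Lemma mlt_from_q {Q : lops} (H : is_loop Q) (HA : automorphic Q) (N : Q -> Prop) (HN : NP N) (f : quot Q N -> quot Q N) :
  mlt f -> exists g : Q -> Q, mlt g /\ forall y, f (qclass Q N y) = qclass Q N (g y).
Proof.
  induction 1 as [|a f _ [g [Mg Eg]]|a f _ [g [Mg Eg]]|a f _ [g [Mg Eg]]|a f _ [g [Mg Eg]]].
  - exists (fun x => x). split; [constructor|reflexivity].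
  - exists (fun x => lmul (qrep a) (g x)). split; [constructor; auto|].
    intros y. rewrite Eg. rewrite (qclass_rep a) at 1. apply (qmul_cl H HA N HN).
  - exists (fun x => lmul (g x) (qrep a)). split; [constructor; auto|].
    intros y. rewrite Eg. rewrite (qclass_rep a) at 1. apply (qmul_cl H HA N HN).
  - exists (fun x => lldiv (qrep a) (g x)). split; [constructor; auto|].
    intros y. rewrite Eg. rewrite (qclass_rep a) at 1. apply (qldiv_cl H HA N HN).
  - exists (fun x => lrdiv (g x) (qrep a)). split; [constructor; auto|].
    intros y. rewrite Eg. rewrite (qclass_rep a) at 1. apply (qrdiv_cl H HA N HN).
Qed.

Lemma NP0 {Q : lops} (H : is_loop Q) : NP (zcent Q 0).
Proof.
  simpl. split; [intros n ->; apply c_one|]. split; [reflexivity|]. split.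
  - intros n m -> ->. apply (l5 H).
  - intros n m -> ->. transitivity (@lldiv Q lone (lmul lone lone)); [rewrite (l5 H); reflexivity| apply (l2 H)].
Qed.

Lemma NPc {Q : lops} (H : is_loop Q) (HA : automorphic Q) : NP (@center Q).
Proof.
  split; [auto|]. split; [apply c_one|]. split.
  - intros n m; apply (c_mul H HA).
  - intros n m; apply (c_ldiv H HA).
Qed.

Lemma qone_cl {Q : lops} (N : Q -> Prop) : @lone (quot Q N) = qclass Q N lone.
Proof. reflexivity. Qed.

Lemma z1_center {Q : lops} (H : is_loop Q) (HA : automorphic Q) : zcent Q 1 = @center Q.
Proof.
  apply functional_extensionality; intro x. apply propositional_extensionality.
  change (zcent Q 1 x) with (@center (quot Q (zcent Q 0)) (qclass Q (zcent Q 0) x)).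
  assert (HN := NP0 H).
  split.
  - intros Cq g [Mg Eg].
    destruct (mlt_to_q H HA _ HN g Mg) as [f [Mf Ef]].
    assert (E : f (qclass Q (zcent Q 0) x) = qclass Q (zcent Q 0) x).
    { apply Cq. split; auto. rewrite qone_cl, Ef, Eg. reflexivity. }
    rewrite Ef in E. symmetry in E.
    destruct (qclass_inj H _ HN _ _ E) as [n [Nn En]]. simpl in Nn. subst n.
    rewrite (l6 H) in En. auto.
  - intros C f [Mf Ef].
    destruct (mlt_from_q H HA _ HN f Mf) as [g [Mg Eg]].
    assert (G1 : g lone = lone).
    { rewrite qone_cl, Eg in Ef. symmetry in Ef.
      destruct (qclass_inj H _ HN _ _ Ef) as [n [Nn En]]. simpl in Nn. subst n.
      rewrite (l6 H) in En. auto. }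
    rewrite Eg, (C g (conj Mg G1)). reflexivity.
Qed.

Lemma inner_fix {Q : lops} (H : is_loop Q) (HA : automorphic Q) (HC : forall x : Q, zcent Q 2 x)
  (g : Q -> Q) : inner g -> forall x, exists n, center n /\ g x = lmul x n.
Proof.
  intros [Mg Eg] x.
  assert (HN := NPc H HA).
  destruct (mlt_to_q H HA _ HN g Mg) as [f [Mf Ef]].
  assert (Z2 : @center (quot Q (@center Q)) (qclass Q (@center Q) x)).
  { assert (Hx := HC x). change (@center (quot Q (zcent Q 1)) (qclass Q (zcent Q 1) x)) in Hx.
    rewrite (z1_center H HA) in Hx. exact Hx. }
  assert (E : f (qclass Q (@center Q) x) = qclass Q (@center Q) x).
  { apply Z2. split; auto. rewrite qone_cl, Ef, Eg. reflexivity. }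
  rewrite Ef in E. symmetry in E.
  exact (qclass_inj H _ HN _ _ E).
Qed.

Lemma hom_k {Q : lops} (H : is_loop Q) (HA : automorphic Q) (g k : Q -> Q) : inner g ->
  (forall x, center (k x)) -> (forall x, g x = lmul x (k x)) ->
  forall x y, k (lmul x y) = lmul (k x) (k y).
Proof.
  intros Ig Ck Gk x y. apply (lcancel H (lmul x y)).
  rewrite <- Gk, (HA g Ig), !Gk. apply (swap4 H HA); auto.
Qed.

Lemma kdef {Q : lops} (H : is_loop Q) (HA : automorphic Q) (HC : forall x : Q, zcent Q 2 x)
  (g : Q -> Q) : inner g ->
  (forall x, center (lldiv x (g x))) /\ (forall x, g x = lmul x (lldiv x (g x))).
Proof.
  intros Ig. split; intros x; destruct (inner_fix H HA HC g Ig x) as [n [Cn En]];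
    rewrite En, (l2 H); auto.
Qed.

Lemma inv_mul {Q : lops} (H : is_loop Q) (HA : automorphic Q) (n m : Q) : center n -> center m ->
  lldiv (lmul n m) lone = lmul (lldiv n lone) (lldiv m lone).
Proof.
  intros Cn Cm. apply (lcancel H (lmul n m)). rewrite (l1 H).
  rewrite <- (swap4 H HA n m (lldiv n lone) (lldiv m lone)).
  - rewrite !(l1 H). symmetry; apply (l5 H).
  - apply (c_ldiv H HA); auto using c_one.
  - apply (c_ldiv H HA); auto using c_one.
Qed.

Theorem proposition2p3 (Q : lops) :
  is_loop Q -> automorphic Q -> nilpotency_class Q 2 ->
  forall a b c d : Q,
    associator (lmul a b) c d = lmul (associator a c d) (associator b c d) /\
    associator a (lmul b c) d = lmul (associator a b d) (associator a c d) /\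
    associator a b (lmul c d) = lmul (associator a b c) (associator a b d).
Proof.
  intros H HA [_ HC] a b c d. unfold associator. split; [|split].
  - set (g := fun x => lrdiv (lmul (lmul x c) d) (lmul c d)).
    assert (Ig : inner g).
    { split.
      - apply (@mlt_Rinv _ (lmul c d) (fun x => lmul (lmul x c) d)).
        apply (@mlt_R _ d (fun x => lmul x c)). apply (@mlt_R _ c (fun x => x)). constructor.
      - unfold g. rewrite (l5 H). transitivity (lrdiv (lmul lone (lmul c d)) (lmul c d));
          [rewrite (l5 H); reflexivity | apply (l4 H)]. }
    destruct (kdef H HA HC g Ig) as [Ck Gk].
    set (k := fun x => lldiv x (g x)) in *.
    assert (A : forall x, lldiv (lmul x (lmul c d)) (lmul (lmul x c) d) = k x).
    { intros x. assert (E : lmul (lmul x c) d = lmul (g x) (lmul c d)) by (unfold g; rewrite (l3 H); reflexivity).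
      rewrite E, (Gk x), (c_as2 H (Ck x)), (c_comm H (Ck x)), <- (c_as3 H (Ck x)), (l2 H).
      reflexivity. }
    rewrite !A. apply (hom_k H HA g k Ig Ck Gk).
  - set (g := fun x => lrdiv (lldiv a (lmul (lmul a x) d)) d).
    assert (Ig : inner g).
    { split.
      - apply (@mlt_Rinv _ d (fun x => lldiv a (lmul (lmul a x) d))).
        apply (@mlt_Linv _ a (fun x => lmul (lmul a x) d)).
        apply (@mlt_R _ d (fun x => lmul a x)). apply (@mlt_L _ a (fun x => x)). constructor.
      - unfold g. rewrite (l6 H), (l2 H). transitivity (lrdiv (lmul lone d) d);
          [rewrite (l5 H); reflexivity | apply (l4 H)]. }
    destruct (kdef H HA HC g Ig) as [Ck Gk].
    set (k := fun x => lldiv x (g x)) in *.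
    assert (A : forall x, lldiv (lmul a (lmul x d)) (lmul (lmul a x) d) = k x).
    { intros x. assert (E : lmul (lmul a x) d = lmul a (lmul (g x) d))
        by (unfold g; rewrite (l3 H), (l1 H); reflexivity).
      rewrite E, (Gk x), (c_as2 H (Ck x)), (c_comm H (Ck x)), <- (c_as3 H (Ck x)),
        <- (c_as3 H (Ck x)), (l2 H).
      reflexivity. }
    rewrite !A. apply (hom_k H HA g k Ig Ck Gk).
  - set (g := fun x => lldiv (lmul a b) (lmul a (lmul b x))).
    assert (Ig : inner g).
    { split.
      - apply (@mlt_Linv _ (lmul a b) (fun x => lmul a (lmul b x))).
        apply (@mlt_L _ a (fun x => lmul b x)). apply (@mlt_L _ b (fun x => x)). constructor.
      - unfold g. rewrite (l6 H). transitivity (lldiv (lmul a b) (lmul (lmul a b) lone));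
          [rewrite (l6 H); reflexivity | apply (l2 H)]. }
    destruct (kdef H HA HC g Ig) as [Ck Gk].
    set (k := fun x => lldiv x (g x)) in *.
    assert (A : forall x, lldiv (lmul a (lmul b x)) (lmul (lmul a b) x) = lldiv (k x) lone).
    { intros x. assert (E : lmul a (lmul b x) = lmul (lmul a b) (g x))
        by (unfold g; rewrite (l1 H); reflexivity).
      rewrite E, (Gk x), <- (c_as3 H (Ck x)).
      apply (lcancel H (lmul (lmul (lmul a b) x) (k x))). rewrite (l1 H).
      rewrite (c_as2 H (Ck x)), (l1 H), (l6 H). reflexivity. }
    rewrite !A, (hom_k H HA g k Ig Ck Gk). apply (inv_mul H HA); apply Ck.
Qed.
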